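(* Let $f:\mathbb{R}^d\to\mathbb{R}$ be differentiable and run AdaSGD (as defined in the context) with parameters $\eta,\gamma>0$ using a stochastic gradient oracle with bounded affine noise with parameters $\sigma_0,\sigma_1\ge0$. Then for all $1\le s\le T$, $$|\tilde\eta_s-\eta_s|\le\frac{2\tilde\eta_s\sqrt{\sigma_0^2+\sigma_1^2\|\nabla f(w_s)\|^2}}{G_s}.$$
   Context: $\|\cdot\|$ is the Euclidean norm. Oracle: queried at $w$, returns random $g(w)$ with $\mathbb{E}[g(w)\mid w]=\nabla f(w)$ and, with probability one, $\|g(w)-\nabla f(w)\|^2\le\sigma_0^2+\sigma_1^2\|\nabla f(w)\|^2$. AdaSGD: arbitrary $w_1$; for $t=1,\dots,T$, $g_t=g(w_t)$, $G_t=\sqrt{\gamma^2+\sum_{s=1}^t\|g_s\|^2}$ ($G_0=\gamma$), $\eta_t=\eta/G_t$, $w_{t+1}=w_t-\eta_tg_t$. Decorrelated step sizes: $\tilde\eta_t=\eta/\sqrt{G_{t-1}^2+(1+\sigma_1^2)\|\nabla f(w_t)\|^2+\sigma_0^2}$. *)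

(* Defs.v *)
From HB Require Import structures.
From mathcomp Require Import all_boot all_order all_algebra.
From mathcomp Require Import all_classical all_reals topology normedtype derive.
Set Implicit Arguments. Unset Strict Implicit. Unset Printing Implicit Defensive.
Import Order.TTheory GRing.Theory Num.Theory.
Import numFieldNormedType.Exports.
Local Open Scope ring_scope.

Definition sqnorm (R : realType) (d : nat) (v : 'rV[R]_d) : R :=
  \sum_(i < d) (v ord0 i) ^+ 2.

Definition enorm (R : realType) (d : nat) (v : 'rV[R]_d) : R :=
  Num.sqrt (sqnorm v).

Definition grad (R : realType) (d : nat) (f : 'rV[R]_d -> R) (w : 'rV[R]_d)
  : 'rV[R]_d :=
  \row_(i < d) (derive (f : 'rV[R]_d -> R^o) w (delta_mx ord0 i)).

Definition adaG (R : realType) (d : nat) (gamma : R) (g : nat -> 'rV[R]_d)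
  (t : nat) : R :=
  Num.sqrt (gamma ^+ 2 + \sum_(1 <= s < t.+1) sqnorm (g s)).

Definition adaeta (R : realType) (d : nat) (eta gamma : R) (g : nat -> 'rV[R]_d)
  (t : nat) : R :=
  eta / adaG gamma g t.

Definition tilde_eta (R : realType) (d : nat) (eta gamma sigma0 sigma1 : R)
  (g : nat -> 'rV[R]_d) (gradw : 'rV[R]_d) (t : nat) : R :=
  eta / Num.sqrt ((adaG gamma g t.-1) ^+ 2
                  + (1 + sigma1 ^+ 2) * sqnorm gradw + sigma0 ^+ 2).

(* Main.v *)
Require Import Defs.
From HB Require Import structures.
From mathcomp Require Import all_boot all_order all_algebra.
From mathcomp Require Import all_classical all_reals topology normedtype derive.
From mathcomp Require Import ring lra.
Import Order.TTheory GRing.Theory Num.Theory.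
Import numFieldNormedType.Exports.
Local Open Scope ring_scope.

Lemma sqnorm_ge0 (R : realType) d (x : 'rV[R]_d) : 0 <= sqnorm x.
Proof. by apply: sumr_ge0 => i _; exact: sqr_ge0. Qed.

Lemma cs (R : realType) d (x y : 'rV[R]_d) :
  (\sum_(i < d) x ord0 i * y ord0 i) ^+ 2 <= sqnorm x * sqnorm y.
Proof.
set A := sqnorm x; set B := sqnorm y; set S := \sum_(i < d) _.
have H t : 0 <= A * t ^+ 2 + 2 * S * t + B.
  have -> : A * t ^+ 2 + 2 * S * t + B =
     \sum_(i < d) (x ord0 i * t + y ord0 i) ^+ 2.
    rewrite /A /B /S /sqnorm mulr_suml mulr_sumr mulr_suml -!big_split /=.
    by apply: eq_bigr => i _; ring.
  by apply: sumr_ge0 => i _; exact: sqr_ge0.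
have A0 : 0 <= A by exact: sqnorm_ge0.
have B0 : 0 <= B by exact: sqnorm_ge0.
have [Az|Ap] := eqVneq A 0.
  have xz i : x ord0 i = 0.
    have := @psumr_eq0P _ _ (fun _ => true) (fun i => x ord0 i ^+ 2)
       (fun i _ => sqr_ge0 _) Az i isT.
    by move/eqP; rewrite sqrf_eq0 => /eqP.
  have -> : S = 0 by rewrite /S big1 // => i _; rewrite xz mul0r.
  by rewrite expr0n /= mulr_ge0.
have Apos : 0 < A by rewrite lt0r Ap.
pose u := S / A.
have SE : S = A * u by rewrite /u mulrC divfK.
have := H (- u); rewrite SE => Hu.
have : A * u ^+ 2 <= B by nra.
by move=> h; nra.
Qed.

Lemma tri (R : realType) d (a b : 'rV[R]_d) :
  Num.sqrt (sqnorm (a + b)) <= Num.sqrt (sqnorm a) + Num.sqrt (sqnorm b).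
Proof.
set S := \sum_(i < d) a ord0 i * b ord0 i.
have E : sqnorm (a + b) = sqnorm a + 2 * S + sqnorm b.
  rewrite /S /sqnorm mulr_sumr -!big_split /=.
  by apply: eq_bigr => i _; rewrite !mxE; ring.
have := @cs _ _ a b; rewrite -/S => hcs.
have A0 := (@sqnorm_ge0 _ _ a); have B0 := (@sqnorm_ge0 _ _ b).
have sa0 := sqrtr_ge0 (sqnorm a); have sb0 := sqrtr_ge0 (sqnorm b).
have ea := sqr_sqrtr A0; have eb := sqr_sqrtr B0.
set sa := Num.sqrt (sqnorm a) in sa0 ea *.
set sb := Num.sqrt (sqnorm b) in sb0 eb *.
have hS : S <= sa * sb.
  rewrite -ea -eb in hcs.
  have hm : 0 <= sa * sb by exact: mulr_ge0.
  case: (lerP S (sa * sb)) => // hlt.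
  have : (sa * sb) ^+ 2 < S ^+ 2.
    have hS0 : 0 <= S by exact: ltW (le_lt_trans hm hlt).
    by rewrite ltr_pXn2r ?nnegrE.
  rewrite exprMn => h; exfalso; lra.
have hle : sqnorm (a + b) <= (sa + sb) ^+ 2 by rewrite E -ea -eb; nra.
rewrite -(@ger0_norm _ (sa + sb)); last by lra.
by rewrite -sqrtr_sqr ler_sqrt // sqr_ge0.
Qed.

Lemma sq_le (R : realType) (x y : R) : 0 <= y -> x ^+ 2 <= y ^+ 2 -> x <= y.
Proof.
move=> y0 h; case: (lerP x y) => // hlt.
have x0 : 0 <= x by exact: ltW (le_lt_trans y0 hlt).
have : y ^+ 2 < x ^+ 2 by rewrite ltr_pXn2r ?nnegrE.
move=> h2; exfalso; lra.
Qed.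

Lemma sqnormN (R : realType) d (a : 'rV[R]_d) : sqnorm (- a) = sqnorm a.
Proof. by rewrite /sqnorm; apply: eq_bigr => i _; rewrite mxE sqrrN. Qed.

Theorem lemma11 (R : realType) (d : nat) (f : 'rV[R]_d -> R)
  (eta gamma sigma0 sigma1 : R) (T : nat)
  (w : nat -> 'rV[R]_d) (g : nat -> 'rV[R]_d) :
  (forall x : 'rV[R]_d, differentiable (f : 'rV[R]_d -> R^o) x) ->
  0 < eta -> 0 < gamma -> 0 <= sigma0 -> 0 <= sigma1 ->
  (* oracle outputs g_t = g(w_t) obey the (almost sure) affine noise bound *)
  (forall t, (1 <= t <= T)%N ->
     sqnorm (g t - grad f (w t))
       <= sigma0 ^+ 2 + sigma1 ^+ 2 * sqnorm (grad f (w t))) ->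
  (* AdaSGD recursion w_{t+1} = w_t - eta_t g_t, w_1 arbitrary *)
  (forall t, (1 <= t <= T)%N -> w t.+1 = w t - adaeta eta gamma g t *: g t) ->
  forall s, (1 <= s <= T)%N ->
    `| tilde_eta eta gamma sigma0 sigma1 g (grad f (w s)) s
       - adaeta eta gamma g s |
    <= 2 * tilde_eta eta gamma sigma0 sigma1 g (grad f (w s)) s
         * Num.sqrt (sigma0 ^+ 2 + sigma1 ^+ 2 * sqnorm (grad f (w s)))
         / adaG gamma g s.
Proof.
move=> _ etap gp s0 s1 Hnoise _ s hs.
have hn := Hnoise s hs.
case: s hs hn => [//|s'] hs hn.
rewrite /tilde_eta /adaeta /= .
set y := grad f (w s'.+1) in hn *.
set gs := g s'.+1 in hn *.
set G0 := adaG gamma g s'.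
have SG0 : 0 <= \sum_(1 <= i < s'.+1) sqnorm (g i).
  by apply: sumr_ge0 => i _; exact: sqnorm_ge0.
have G0sq : G0 ^+ 2 = gamma ^+ 2 + \sum_(1 <= i < s'.+1) sqnorm (g i).
  by rewrite /G0 /adaG sqr_sqrtr // addr_ge0 // sqr_ge0.
have G0pos : 0 < G0 ^+ 2 by rewrite G0sq; nra.
have Bsq : adaG gamma g s'.+1 ^+ 2 = G0 ^+ 2 + sqnorm gs.
  rewrite /adaG sqr_sqrtr; last by rewrite addr_ge0 ?sqr_ge0 // sumr_ge0 // => i _; exact: sqnorm_ge0.
  by rewrite G0sq big_nat_recr //= addrA.
set B := adaG gamma g s'.+1 in Bsq *.
have B0 : 0 <= B by exact: sqrtr_ge0.
set V := sigma0 ^+ 2 + sigma1 ^+ 2 * sqnorm y in hn *.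
have V0 : 0 <= V by rewrite /V addr_ge0 ?sqr_ge0 // mulr_ge0 ?sqr_ge0 ?sqnorm_ge0.
have Asq : Num.sqrt (G0 ^+ 2 + (1 + sigma1 ^+ 2) * sqnorm y + sigma0 ^+ 2) ^+ 2
    = G0 ^+ 2 + sqnorm y + V.
  rewrite sqr_sqrtr; first by rewrite /V; ring.
  have := @sqnorm_ge0 _ _ y; have := sqr_ge0 sigma1; have := sqr_ge0 sigma0.
  have := sqr_ge0 G0; nra.
set A := Num.sqrt _ in Asq *.
have A0 : 0 <= A by exact: sqrtr_ge0.
set p := Num.sqrt (sqnorm gs).
set q := Num.sqrt (sqnorm y).
set v := Num.sqrt V.
have p0 : 0 <= p by exact: sqrtr_ge0.
have q0 : 0 <= q by exact: sqrtr_ge0.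
have v0 : 0 <= v by exact: sqrtr_ge0.
have ep : p ^+ 2 = sqnorm gs by rewrite sqr_sqrtr // sqnorm_ge0.
have eq : q ^+ 2 = sqnorm y by rewrite sqr_sqrtr // sqnorm_ge0.
have ev : v ^+ 2 = V by rewrite sqr_sqrtr.
have hev : Num.sqrt (sqnorm (gs - y)) <= v by rewrite ler_sqrt.
have hpq : p <= q + v.
  have := @tri _ _ y (gs - y); rewrite addrC subrK -/p -/q; lra.
have hqp : q <= p + v.
  have := @tri _ _ gs (- (gs - y)); rewrite sqnormN opprB addrC subrK -/p -/q; lra.
rewrite -ep in Bsq; rewrite -eq -ev in Asq.
have Apos : 0 < A by nra.
have Bpos : 0 < B by nra.
have qA : q <= A by apply: sq_le => //; lra.
have pB : p <= B by apply: sq_le => //; lra.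
have hp2 : p ^+ 2 <= (q + v) ^+ 2 by rewrite ler_pXn2r ?nnegrE //; lra.
have hq2 : q ^+ 2 <= (p + v) ^+ 2 by rewrite ler_pXn2r ?nnegrE //; lra.
have hBA : B <= A + 2 * v.
  apply: sq_le; first lra.
  rewrite Bsq; have : 0 <= A * v by exact: mulr_ge0.
  have : q * v <= A * v by exact: ler_wpM2r.
  move: hp2 Asq; rewrite !expr2 => ? ? ? ?; nra.
have hAB : A <= B + 2 * v.
  apply: sq_le; first lra.
  rewrite Asq; have : 0 <= B * v by exact: mulr_ge0.
  have : p * v <= B * v by exact: ler_wpM2r.
  move: hq2 Bsq; rewrite !expr2 => ? ? ? ?; nra.
have -> : eta / A - eta / B = eta * (B - A) / (A * B) by field; apply/andP; split; apply: lt0r_neq0.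
have -> : 2 * (eta / A) * v / B = eta * (2 * v) / (A * B) by field; apply/andP; split; apply: lt0r_neq0.
rewrite normrM normrM (gtr0_norm etap) [`|(A * B)^-1|]gtr0_norm; last first.
  by rewrite invr_gt0 mulr_gt0.
rewrite ler_pM2r ?invr_gt0 ?mulr_gt0 // ler_pM2l // ler_norml.
apply/andP; split; clear -hBA hAB; lra.
Qed.
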